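(* Let $G_1$ be an FC-group (every element has a centraliser of finite index), let $n,m\ge 0$, let $G\le G_1^n$ be a subgroup, let $w(\bar x,\bar y)$ be a group word in the variables $\bar x=(x_1,\dots,x_n)$, $\bar y=(y_1,\dots,y_m)$ and their inverses, and let $\bar g\in G_1^m$ and $c\in G_1$. If the set $X=\{\bar h\in G: w(\bar h,\bar g)=c\}$ is large in $G$, then $w(\bar h,\bar g)=c$ for all $\bar h\in G$.
   Context: $w(\bar x,\bar g)$ induces a function $G\to G_1$ by substitution. A subset $X\subseteq G$ is $k$-large in $G$ if the intersection of any $k$ left translates $\bar a_1X\cap\dots\cap\bar a_kX$ ($\bar a_i\in G$) is non-empty; $X$ is large in $G$ if it is $k$-large for every $k\ge1$. *)

(* Defs.v *)
From Stdlib Require List.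
From mathcomp Require Import all_boot.
Set Implicit Arguments.
Unset Strict Implicit.
Unset Printing Implicit Defensive.

Record group := Group {
  carrier :> Type;
  gmul : carrier -> carrier -> carrier;
  ginv : carrier -> carrier;
  gone : carrier;
  gmulA : forall x y z, gmul x (gmul y z) = gmul (gmul x y) z;
  gmul1 : forall x, gmul gone x = x;
  gmulV : forall x, gmul (ginv x) x = gone
}.

Definition centraliser (G1 : group) (x : G1) : G1 -> Prop :=
  fun y => gmul y x = gmul x y.

Definition finite_index (G1 : group) (H : G1 -> Prop) : Prop :=
  exists s : list G1, forall g : G1,
    exists r, List.In r s /\ H (gmul (ginv r) g).

Definition FC_group (G1 : group) : Prop :=
  forall x : G1, finite_index (centraliser x).

Definition pmul (G1 : group) (n : nat) (a b : 'I_n -> G1) : 'I_n -> G1 :=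
  fun i => gmul (a i) (b i).
Definition pinv (G1 : group) (n : nat) (a : 'I_n -> G1) : 'I_n -> G1 :=
  fun i => ginv (a i).
Definition pone (G1 : group) (n : nat) : 'I_n -> G1 := fun _ => gone G1.

Definition is_subgroup (G1 : group) (n : nat) (G : ('I_n -> G1) -> Prop) : Prop :=
  G (@pone G1 n) /\
  (forall a b, G a -> G b -> G (pmul a b)) /\
  (forall a, G a -> G (pinv a)).

(* X (a subset of G) is k-large in G: any k left translates a_1 X, ..., a_k X
   with a_i in G have a common point. (x \in a X iff a^-1 x \in X.) *)
Definition k_large (G1 : group) (n : nat) (G X : ('I_n -> G1) -> Prop) (k : nat) : Prop :=
  forall a : 'I_k -> ('I_n -> G1), (forall i, G (a i)) ->
    exists x : 'I_n -> G1, forall i, X (pmul (pinv (a i)) x).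

Definition large (G1 : group) (n : nat) (G X : ('I_n -> G1) -> Prop) : Prop :=
  forall k, 1 <= k -> k_large G X k.

Inductive word (V : Type) : Type :=
  | WVar of V
  | WOne
  | WMul of word V & word V
  | WInv of word V.
Arguments WOne {V}.

Fixpoint eval_word (G1 : group) (V : Type) (e : V -> G1) (w : word V) : G1 :=
  match w with
  | WVar v => e v
  | WOne => gone G1
  | WMul u v => gmul (eval_word e u) (eval_word e v)
  | WInv u => ginv (eval_word e u)
  end.

Definition eval2 (G1 : group) (n m : nat) (w : word ('I_n + 'I_m))
    (h : 'I_n -> G1) (g : 'I_m -> G1) : G1 :=
  eval_word (fun v => match v with inl i => h i | inr j => g j end) w.

(* Main.v *)
From Stdlib Require Import Classical FunctionalExtensionality.
Require Import Defs.
From mathcomp Require Import all_boot.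

Set Implicit Arguments.
Unset Strict Implicit.

Section GroupLemmas.
Variable G : group.
Implicit Types x y z a b : G.

Lemma mulxV x : gmul x (ginv x) = gone G.
Proof.
have e: gmul (gmul x (ginv x)) (gmul x (ginv x)) = gmul x (ginv x).
  by rewrite -gmulA (gmulA (ginv x)) gmulV gmul1.
rewrite -[LHS]gmul1 -{1}(gmulV (gmul x (ginv x))) -gmulA e.
by rewrite gmulV.
Qed.

Lemma mulx1 x : gmul x (gone G) = x.
Proof. by rewrite -(gmulV x) gmulA mulxV gmul1. Qed.

Lemma mulKl x y : gmul (ginv x) (gmul x y) = y.
Proof. by rewrite gmulA gmulV gmul1. Qed.

Lemma mulKr x y : gmul x (gmul (ginv x) y) = y.
Proof. by rewrite gmulA mulxV gmul1. Qed.

Lemma inv_uniq x y : gmul x y = gone G -> y = ginv x.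
Proof. by move=> e; rewrite -(mulKl x y) e mulx1. Qed.

Lemma invM x y : ginv (gmul x y) = gmul (ginv y) (ginv x).
Proof.
symmetry; apply: inv_uniq.
by rewrite -gmulA (gmulA y) mulxV gmul1 mulxV.
Qed.

Lemma invK x : ginv (ginv x) = x.
Proof. by symmetry; apply: inv_uniq; apply: gmulV. Qed.

Lemma mul_cancel_r x y z : gmul x z = gmul y z -> x = y.
Proof.
move=> e; rewrite -(mulx1 x) -(mulxV z) gmulA e -gmulA mulxV.
by rewrite mulx1.
Qed.

Definition comm a b := gmul a b = gmul b a.

Lemma comm_sym a b : comm a b -> comm b a.
Proof. by rewrite /comm => ->. Qed.

Lemma comm1 a : comm a (gone G).
Proof. by rewrite /comm mulx1 gmul1. Qed.

Lemma commM a b c : comm a b -> comm a c -> comm a (gmul b c).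
Proof.
rewrite /comm => e1 e2.
by rewrite gmulA e1 -gmulA e2 gmulA.
Qed.

Lemma commV a b : comm a b -> comm a (ginv b).
Proof.
rewrite /comm => e.
have: gmul (ginv b) (gmul (gmul a b) (ginv b)) =
      gmul (ginv b) (gmul (gmul b a) (ginv b)) by rewrite e.
rewrite -!gmulA mulxV mulx1 mulKl => ->. done.
Qed.

Lemma commMl a b c : comm a c -> comm b c -> comm (gmul a b) c.
Proof. move=> h1 h2; apply: comm_sym; apply: commM; exact: comm_sym. Qed.

Lemma commVl a c : comm a c -> comm (ginv a) c.
Proof. move=> h; apply: comm_sym; apply: commV; exact: comm_sym. Qed.

Lemma comm_eval (V : Type) (E : V -> G) a u :
  (forall v, comm a (E v)) -> comm a (eval_word E u).
Proof.
move=> H; elim: u => [v|||u IH] /=.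
- exact: H.
- exact: comm1.
- move=> u1 IH1 u2 IH2; exact: commM.
- exact: commV.
Qed.

Lemma eval_ext (V : Type) (E F : V -> G) u :
  (forall v, E v = F v) -> eval_word E u = eval_word F u.
Proof.
move=> H; elim: u => [v|||u IH] /=; first exact: H; first done.
- by move=> u1 -> u2 ->.
- by rewrite IH.
Qed.

Lemma eval_mul (V : Type) (E F : V -> G) u :
  (forall v v', comm (F v) (E v')) ->
  eval_word (fun v => gmul (E v) (F v)) u =
  gmul (eval_word E u) (eval_word F u).
Proof.
move=> H.
have C : forall u u', comm (eval_word F u) (eval_word E u').
  move=> u1 u2; apply: comm_eval => v'; apply: comm_sym; apply: comm_eval => v.
  exact: comm_sym.
elim: u => [v|||u IH] /=.
- done.
- by rewrite gmul1.
- move=> u1 -> u2 ->.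
  by rewrite -!gmulA (gmulA (eval_word F u1)) (C u1 u2) -gmulA.
- rewrite IH invM; apply: commV; apply: commVl; exact: C.
Qed.

End GroupLemmas.

Lemma In_mem (T : eqType) (x : T) (s : seq T) : x \in s -> List.In x s.
Proof.
elim: s => //= y s IH; rewrite in_cons => /orP [/eqP -> | /IH]; [left | right] => //.
Qed.

Section Main.
Variables (G1 : group) (n : nat) (G : ('I_n -> G1) -> Prop)
  (X : ('I_n -> G1) -> Prop).
Hypothesis HG : is_subgroup G.
Hypothesis HX : forall x, X x -> G x.
Hypothesis Hlarge : large G X.
Hypothesis FC : FC_group G1.

Lemma pmulA (a b c : 'I_n -> G1) : pmul a (pmul b c) = pmul (pmul a b) c.
Proof. apply: functional_extensionality => i; exact: gmulA. Qed.
Lemma pinvK (a : 'I_n -> G1) : pinv (pinv a) = a.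
Proof. apply: functional_extensionality => i; exact: invK. Qed.
Lemma pmulKl (a b : 'I_n -> G1) : pmul (pinv a) (pmul a b) = b.
Proof. apply: functional_extensionality => i; exact: mulKl. Qed.

Lemma G1' : G (@pone G1 n). Proof. by case: HG. Qed.
Lemma GM a b : G a -> G b -> G (pmul a b). Proof. by case: HG => _ []; auto. Qed.
Lemma GV a : G a -> G (pinv a). Proof. by case: HG => _ []; auto. Qed.

Fixpoint NL (L : list ('I_n * G1)) (k : 'I_n -> G1) : Prop :=
  match L with
  | nil => True
  | cons p L' => comm (k p.1) p.2 /\ NL L' k
  end.

Lemma NL_one L : NL L (@pone G1 n).
Proof. elim: L => //= p L IH; split => //; rewrite /comm /pone gmul1 mulx1 //. Qed.

Lemma NL_mul L a b : NL L a -> NL L b -> NL L (pmul a b).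
Proof.
elim: L => //= p L IH [h1 h2] [h3 h4]; split; last exact: IH.
exact: commMl.
Qed.

Lemma NL_inv L a : NL L a -> NL L (pinv a).
Proof.
elim: L => //= p L IH [h1 h2]; split; last exact: IH.
exact: commVl.
Qed.

Lemma NL_In L k p : NL L k -> List.In p L -> comm (k p.1) p.2.
Proof.
elim: L => //= q L IH [h1 h2] [<-|hp] //; exact: IH.
Qed.

Lemma cent_comm (z y : G1) : centraliser z y <-> comm y z.
Proof. done. Qed.

Lemma reps (i : 'I_n) (z : G1) L (s : list G1) :
  exists (J : finType) (u : J -> 'I_n -> G1),
    (forall j, G (u j) /\ NL L (u j)) /\
    forall y, G y -> NL L y ->
      (exists r, List.In r s /\ centraliser z (gmul (ginv r) (y i))) ->
      exists j, centraliser z (gmul (ginv (u j i)) (y i)).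
Proof.
elim: s => [|r s [J [u [Hu Hc]]]].
  exists void, (fun v : void => match v with end); split; first by case.
  by move=> y _ _ [r [[]]].
case: (classic (exists y0, G y0 /\ NL L y0 /\
                 centraliser z (gmul (ginv r) (y0 i)))) => [[y0 [G0 [N0 C0]]]|Hno].
- exists (option J)%type, (fun o => match o with Some j => u j | None => y0 end).
  split; first by case.
  move=> y Gy Ny [r' [[<-|Hr] Cr]].
  + exists None.
    have -> : gmul (ginv (y0 i)) (y i) =
              gmul (ginv (gmul (ginv r) (y0 i))) (gmul (ginv r) (y i)).
      by rewrite invM invK -gmulA mulKr.
    apply/cent_comm; apply: commMl; apply/cent_comm => //.
    exact: commVl.
  + have [j Hj] := Hc y Gy Ny (ex_intro _ r' (conj Hr Cr)).
    by exists (Some j).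
- exists J, u; split => //.
  move=> y Gy Ny [r' [[<-|Hr] Cr]].
  + exfalso; apply: Hno; exists y; done.
  + exact: Hc y Gy Ny (ex_intro _ r' (conj Hr Cr)).
Qed.

Lemma claim L : forall (I : finType) (A : I -> 'I_n -> G1),
  (forall i, G (A i)) ->
  exists k, G k /\ NL L k /\ forall i, X (pmul (A i) k).
Proof.
elim: L => [|[i z] L IH] I A HA.
- have [c0|cpos] := posnP #|I|.
    exists (@pone G1 n); split; first exact: G1'; split => // j.
    exfalso; move: (enum_rank j); rewrite c0; by case.
  have [x Hx] := (Hlarge cpos : k_large G X #|I|) (fun j => pinv (A (enum_val j)))
                    (fun j => GV (HA (enum_val j))).
  exists x; split; last split => //.
    have := HX (Hx (Ordinal cpos)); rewrite pinvK => Hg.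
    rewrite -(pmulKl (A (enum_val (Ordinal cpos))) x).
    apply: GM => //; exact: GV.
  move=> j; have := Hx (enum_rank j); by rewrite enum_rankK pinvK.
- have [s Hs] := FC z.
  have [J [u [Hu Hc]]] := reps i z L s.
  have [k [Gk [Nk Xk]]] := IH _
      (fun p : (I * J)%type => pmul (A p.1) (pinv (u p.2)))
      (fun p => GM (HA p.1) (GV (proj1 (Hu p.2)))).
  have [j Hj] := Hc k Gk Nk (Hs (k i)).
  exists (pmul (pinv (u j)) k); split; last split.
  + apply: GM => //; apply: GV; exact: (proj1 (Hu j)).
  + split; first exact: Hj.
    apply: NL_mul => //; apply: NL_inv; exact: (proj2 (Hu j)).
  + move=> a; rewrite pmulA; exact: (Xk (a, j)).
Qed.

End Main.

Theorem theorem3p2 (G1 : group) (n m : nat) (G : ('I_n -> G1) -> Prop)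
    (w : word ('I_n + 'I_m)) (g : 'I_m -> G1) (c : G1) :
  FC_group G1 ->
  is_subgroup G ->
  large G (fun h => G h /\ eval2 w h g = c) ->
  forall h, G h -> eval2 w h g = c.
Proof.
move=> FC HG HL.
set X := fun h => G h /\ eval2 w h g = c.
have HX : forall x, X x -> G x by move=> x [].
have dec : forall h k, (forall i j, comm (k i) (h j)) ->
    (forall i j, comm (k i) (g j)) ->
    eval2 w (pmul h k) g = gmul (eval2 w h g)
      (eval_word (fun v => match v with inl i => k i | inr _ => gone G1 end) w).
  move=> h k H1 H2; rewrite /eval2 -eval_mul.
    by apply: eval_ext; case => j /=; rewrite ?mulx1.
  case=> [i|i] [j|j] /=; [exact: H1 | exact: H2 | |];
    apply: comm_sym; exact: comm1.
have key : forall h, G h -> eval2 w h g = eval2 w (@pone G1 n) g.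
  move=> h Gh.
  pose E := fun v : 'I_n + 'I_m => match v with inl j => h j | inr j => g j end.
  pose L := map (fun p : 'I_n * ('I_n + 'I_m) => (p.1, E p.2))
                (enum (predT : {pred ('I_n * ('I_n + 'I_m))})).
  have [k [Gk [Nk Xk]]] := @claim G1 n G X HG HX HL FC L _
      (fun b : bool => if b then h else @pone G1 n)
      (fun b => if b as b0 return G (if b0 then h else @pone G1 n) then Gh else G1' HG).
  have Cin : forall i v, comm (k i) (E v).
    move=> i v; apply: (NL_In Nk (p := (i, E v))).
    apply: (List.in_map (fun p : 'I_n * ('I_n + 'I_m) => (p.1, E p.2)) _ (i, v)).
    apply: In_mem; by rewrite mem_enum.
  have [_ e1] := Xk true.
  have [_ e2] := Xk false.
  rewrite /= in e1 e2.
  rewrite dec in e1; try by move=> i j; exact: (Cin i (inl j)).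
    2: by move=> i j; exact: (Cin i (inr j)).
  rewrite dec in e2; try by move=> i j; exact: (Cin i (inr j)).
    2: by move=> i j; rewrite /pone; exact: comm1.
  apply: mul_cancel_r; etransitivity; [exact: e1 | symmetry; exact: e2].
move=> h Gh.
have [x Hx] := HL 1 (isT : 0 < 1) (fun _ => @pone G1 n) (fun _ => G1' HG).
have [Gy ey] := Hx ord0.
by rewrite (key h Gh) -ey (key _ Gy).
Qed.
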